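(* Assume the setting in the context, with $a<t_1<\dots<t_n<b$, $n>m$, $T$ ($T[i,j]=u_j(t_i)$) of full column rank $m$, $K$ ($K[i,j]=R_1(t_i,t_j)$) invertible, $D$ diagonal with positive entries $d_i$, $\lambda>0$, and $M=K+\lambda D^{-1}$. Let $Q$ be an $n\times(n-m)$ matrix of full column rank such that $Q'T=0$ and $Q_{ij}=0$ unless $i\in\{j,j+1,\dots,j+m\}$. Then: (i) $[Q'MQ]_{kl}=0$ whenever $|k-l|>m$ (i.e. $Q'MQ$ is banded with bandwidth $m$), and in fact $[Q'KQ]_{kl}=0$ and $[Q'D^{-1}Q]_{kl}=0$ for $|k-l|>m$; (ii) the unique minimizer $(\hat\alpha,\hat\beta)$ of $(\mathbf Y-T\alpha-K\beta)'D(\mathbf Y-T\alpha-K\beta)+\lambda\beta'K\beta$ satisfies $T'\hat\beta=0$, $$\hat\beta=Q(Q'MQ)^{-1}Q'\mathbf Y,\qquad\hat\alpha=(T'T)^{-1}T'(\mathbf Y-M\hat\beta),$$ and the fitted vector $\hat{\mathbf Y}=T\hat\alpha+K\hat\beta$ equals $\mathbf Y-\lambda D^{-1}\hat\beta$.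
   Context: $[a,b]$ is a finite interval, $m\ge1$, $w_0,\dots,w_{m-1}$ continuous real functions on $[a,b]$, $(L\mu)(t)=\mu^{(m)}(t)+\sum_{j=0}^{m-1}w_j(t)\mu^{(j)}(t)$. $u_1,\dots,u_m$ are real, $m$ times differentiable functions forming a basis of $\{\mu:L\mu\equiv0\}$, with Wronskian $[W(t)]_{ij}=u_i^{(j-1)}(t)$ invertible for all $t\in[a,b]$; $(u_1^*(t),\dots,u_m^*(t))$ is the last row of $W(t)^{-1}$. The Green's function is $\mathcal G(t,u)=\sum_{i=1}^mu_i(t)u_i^*(u)$ for $u\le t$ and $0$ otherwise, and $R_1(s,t)=\int_a^b\mathcal G(s,u)\mathcal G(t,u)\,du$. $\mathbf Y=(Y_1,\dots,Y_n)'\in\mathbb R^n$. *)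

(* Defs.v *)
(* Small self-contained matrix layer: matrices are functions nat -> nat -> R,
   vectors nat -> R; all indices are 0-based and dimensions are explicit. *)
From Stdlib Require Import Reals Lra Lia.
Open Scope R_scope.

Fixpoint rsum (n : nat) (f : nat -> R) : R :=
  match n with O => 0 | S k => rsum k f + f k end.

Definition mat := nat -> nat -> R.
Definition vec := nat -> R.

Definition mmul (p : nat) (A B : mat) : mat :=
  fun i j => rsum p (fun k => A i k * B k j).
Definition mtr (A : mat) : mat := fun i j => A j i.
Definition madd (A B : mat) : mat := fun i j => A i j + B i j.
Definition mscale (c : R) (A : mat) : mat := fun i j => c * A i j.
Definition mid : mat := fun i j => if Nat.eqb i j then 1 else 0.
Definition diag (d : vec) : mat := fun i j => if Nat.eqb i j then d i else 0.
Definition mv (p : nat) (A : mat) (x : vec) : vec :=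
  fun i => rsum p (fun j => A i j * x j).
Definition vsub (x y : vec) : vec := fun i => x i - y i.
Definition dot (n : nat) (x y : vec) : R := rsum n (fun i => x i * y i).
Definition veq (n : nat) (x y : vec) : Prop := forall i, (i < n)%nat -> x i = y i.

Definition is_inverse (n : nat) (A B : mat) : Prop :=
  forall i j, (i < n)%nat -> (j < n)%nat ->
    mmul n A B i j = mid i j /\ mmul n B A i j = mid i j.
Definition invertible (n : nat) (A : mat) : Prop := exists B, is_inverse n A B.

Definition full_column_rank (r c : nat) (A : mat) : Prop :=
  forall x : vec, (forall i, (i < r)%nat -> mv c A x i = 0) ->
    forall j, (j < c)%nat -> x j = 0.

Definition cont_on (a b : R) (f : R -> R) : Prop :=
  forall t, a <= t <= b -> limit1_in f (fun x => a <= x <= b) (f t) t.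

(* derivative of f at t relative to [a,b] (one-sided at the endpoints) *)
Definition deriv_within (a b : R) (f : R -> R) (t l : R) : Prop :=
  limit1_in (fun x => (f x - f t) / (x - t)) (fun x => a <= x <= b /\ x <> t) l t.

(* df 0 is m times differentiable on [a,b], df k being its k-th derivative *)
Definition has_derivs (a b : R) (m : nat) (df : nat -> R -> R) : Prop :=
  forall k, (k < m)%nat -> forall t, a <= t <= b ->
    deriv_within a b (df k) t (df (S k) t).

Definition Lop (m : nat) (w : nat -> R -> R) (df : nat -> R -> R) (t : R) : R :=
  df m t + rsum m (fun j => w j t * df j t).

(* u i k = k-th derivative of u_(i+1); Wronskian [W(t)]_{ij} = u_i^{(j)}(t) *)
Definition wronskian (u : nat -> nat -> R -> R) (t : R) : mat :=
  fun i j => u i j t.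

Definition green (m : nat) (u : nat -> nat -> R -> R) (ustar : nat -> R -> R)
  (t s : R) : R :=
  if Rle_dec s t then rsum m (fun i => u i O t * ustar i s) else 0.

Definition Tmat (u : nat -> nat -> R -> R) (t : nat -> R) : mat :=
  fun i j => u j O (t i).

Definition Dinv (d : vec) : mat := diag (fun i => / d i).
Definition Mmat (K : mat) (lam : R) (d : vec) : mat := madd K (mscale lam (Dinv d)).

Definition QtAQ (n : nat) (Q A : mat) : mat := mmul n (mmul n (mtr Q) A) Q.

Definition pls_obj (n m : nat) (Y : vec) (T K D : mat) (lam : R) (al be : vec) : R :=
  let r := fun i => Y i - mv m T al i - mv n K be i in
  dot n r (mv n D r) + lam * dot n be (mv n K be).

Definition is_minimizer (n m : nat) (Y : vec) (T K D : mat) (lam : R) (al be : vec) : Prop :=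
  forall al' be', pls_obj n m Y T K D lam al be <= pls_obj n m Y T K D lam al' be'.

(* Main.v *)
Require Import Defs.
From Stdlib Require Import Reals Lra Lia.
From mathcomp Require all_boot all_algebra Rstruct.
Open Scope R_scope.

Module MC.
Import all_boot all_algebra Rstruct.
Import GRing.Theory.
Local Open Scope ring_scope.

Lemma rsum_big N (f : nat -> R) : rsum N f = \sum_(i < N) f i.
Proof.
elim: N => [|N IH] /=; first by rewrite big_ord0.
by rewrite big_ord_recr /= IH.
Qed.

Definition ext {N} (v : 'I_N -> R) (k : nat) : R :=
  match insub k with Some k' => v k' | None => 0 end.

Lemma extE {N} v (k : 'I_N) : ext v k = v k.
Proof. by rewrite /ext valK. Qed.

Lemma extE' {N} v {k} (Hk : (k < N)%coq_nat) : ext v k = v (Ordinal (introT ltP Hk)).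
Proof.
rewrite /ext; case: insubP => [k' _ Hk'|]; last by move=> /negP; case; apply/ltP.
by congr v; apply: val_inj; rewrite Hk'.
Qed.

Lemma midE {N i j} (Hi : (i < N)%coq_nat) (Hj : (j < N)%coq_nat) :
  mid i j = (1%:M : 'M[R]_N) (Ordinal (introT ltP Hi)) (Ordinal (introT ltP Hj)).
Proof.
rewrite mxE /mid -[_ == _]/(i == j)%N.
by case: Nat.eqb_spec => [->|ne]; [rewrite eqxx | case: eqP].
Qed.

Lemma fcr_invertible N (A : mat) : full_column_rank N N A -> invertible N A.
Proof.
move=> H.
pose M := \matrix_(i < N, j < N) A i j.
have key : forall p (v : 'M[R]_(N, p)), M *m v = 0 -> v = 0.
  move=> p v Hv; apply/matrixP => i j.
  have := H (ext (fun k => v k j)) _ i (elimT ltP (ltn_ord i)).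
  rewrite extE => ->; first by rewrite mxE.
  move=> k Hk.
  rewrite /mv rsum_big.
  transitivity ((M *m v) (Ordinal (introT ltP Hk)) j); last by rewrite Hv mxE.
  rewrite mxE; apply: eq_bigr => l _; by rewrite mxE extE.
have HK : kermx M^T = 0.
  apply: trmx_inj; rewrite trmx0; apply: key.
  by rewrite -[M in M *m _]trmxK -trmx_mul mulmx_ker trmx0.
have Hu : M \in unitmx.
  by rewrite -unitmx_tr -row_free_unit -kermx_eq0 HK.
exists (fun i j => ext (fun i' => ext (fun j' => invmx M i' j') j) i).
move=> i j Hi Hj; split.
- rewrite (midE Hi Hj) -(mulmxV Hu) mxE /mmul rsum_big.
  apply: eq_bigr => k _; by rewrite mxE extE (extE' _ Hj).
- rewrite (midE Hi Hj) -(mulVmx Hu) mxE /mmul rsum_big.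
  apply: eq_bigr => k _; by rewrite mxE (extE' _ Hi) extE.
Qed.
End MC.

Lemma rsum_ext n f g : (forall i, (i < n)%nat -> f i = g i) -> rsum n f = rsum n g.
Proof.
  induction n; intros H; simpl; auto.
  rewrite IHn by (intros; apply H; lia). rewrite H by lia. reflexivity.
Qed.

Lemma rsum_plus n f g : rsum n (fun i => f i + g i) = rsum n f + rsum n g.
Proof. induction n; simpl; [ring | rewrite IHn; ring]. Qed.

Lemma rsum_minus n f g : rsum n (fun i => f i - g i) = rsum n f - rsum n g.
Proof. induction n; simpl; [ring | rewrite IHn; ring]. Qed.

Lemma rsum_scal n c f : rsum n (fun i => c * f i) = c * rsum n f.
Proof. induction n; simpl; [ring | rewrite IHn; ring]. Qed.

Lemma rsum_zero n f : (forall i, (i < n)%nat -> f i = 0) -> rsum n f = 0.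
Proof.
  intros H; rewrite (rsum_ext n f (fun _ => 0)) by auto.
  clear H; induction n; simpl; [ring | rewrite IHn; ring].
Qed.

Lemma rsum_swap n p (f : nat -> nat -> R) :
  rsum n (fun i => rsum p (fun j => f i j)) = rsum p (fun j => rsum n (fun i => f i j)).
Proof.
  induction n; simpl.
  - symmetry; apply rsum_zero; auto.
  - rewrite IHn, <- rsum_plus. reflexivity.
Qed.

Lemma rsum_nonneg n f : (forall i, (i < n)%nat -> 0 <= f i) -> 0 <= rsum n f.
Proof.
  induction n; intros H; simpl; [lra|].
  assert (0 <= rsum n f) by (apply IHn; intros; apply H; lia).
  assert (0 <= f n) by (apply H; lia). lra.
Qed.

Lemma rsum_nonneg_eq0 n f : (forall i, (i < n)%nat -> 0 <= f i) -> rsum n f = 0 ->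
  forall i, (i < n)%nat -> f i = 0.
Proof.
  induction n; intros H E i Hi; [lia|]. simpl in E.
  assert (0 <= rsum n f) by (apply rsum_nonneg; intros; apply H; lia).
  assert (0 <= f n) by (apply H; lia).
  destruct (Nat.eq_dec i n) as [->|ne]; [lra|].
  apply IHn; [intros; apply H; lia | lra | lia].
Qed.

Lemma rsum_single n f k : (k < n)%nat -> (forall i, (i < n)%nat -> i <> k -> f i = 0) ->
  rsum n f = f k.
Proof.
  induction n; intros Hk H; [lia|]. simpl.
  destruct (Nat.eq_dec k n) as [->|ne].
  - rewrite rsum_zero; [ring|]. intros; apply H; lia.
  - rewrite IHn by (try lia; intros; apply H; lia). rewrite (H n) by lia. ring.
Qed.

Lemma rsum_split m p f : rsum (m + p) f = rsum m f + rsum p (fun k => f (m + k)%nat).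
Proof.
  induction p; simpl.
  - rewrite Nat.add_0_r; ring.
  - rewrite Nat.add_succ_r; simpl; rewrite IHp; ring.
Qed.

Lemma mv_ext p A x y : (forall j, (j < p)%nat -> x j = y j) -> forall i, mv p A x i = mv p A y i.
Proof. intros H i; unfold mv; apply rsum_ext; intros; rewrite H; auto. Qed.

Lemma mv_mmul p q A B x i : mv p (mmul q A B) x i = mv q A (mv p B x) i.
Proof.
  unfold mv, mmul.
  transitivity (rsum p (fun j => rsum q (fun k => A i k * (B k j * x j)))).
  - apply rsum_ext; intros j _. rewrite Rmult_comm, <- rsum_scal. apply rsum_ext; intros; ring.
  - rewrite rsum_swap. apply rsum_ext; intros k _. rewrite rsum_scal. reflexivity.
Qed.

Lemma dot_mv_tr n m x A y : dot n x (mv m A y) = dot m (mv n (mtr A) x) y.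
Proof.
  unfold dot, mv, mtr.
  transitivity (rsum n (fun i => rsum m (fun j => x i * A i j * y j))).
  - apply rsum_ext; intros i _. rewrite <- rsum_scal. apply rsum_ext; intros; ring.
  - rewrite rsum_swap. apply rsum_ext; intros j _.
    rewrite Rmult_comm, <- rsum_scal. apply rsum_ext; intros; ring.
Qed.

Lemma mv_mid n x i : (i < n)%nat -> mv n mid x i = x i.
Proof.
  intros Hi; unfold mv. rewrite (rsum_single n _ i Hi).
  - unfold mid; rewrite Nat.eqb_refl; ring.
  - intros j _ ne; unfold mid. destruct (Nat.eqb_spec i j); [lia|ring].
Qed.

Lemma mv_diag n f x i : (i < n)%nat -> mv n (diag f) x i = f i * x i.
Proof.
  intros Hi; unfold mv. rewrite (rsum_single n _ i Hi).
  - unfold diag; rewrite Nat.eqb_refl; ring.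
  - intros j _ ne; unfold diag. destruct (Nat.eqb_spec i j); [lia|ring].
Qed.

Lemma inv_left n A B x i : is_inverse n A B -> (i < n)%nat ->
  mv n B (mv n A x) i = x i.
Proof.
  intros H Hi. rewrite <- mv_mmul. unfold mv.
  transitivity (mv n mid x i); [|apply mv_mid; auto].
  unfold mv; apply rsum_ext; intros j Hj. destruct (H i j Hi Hj) as [_ ->]. reflexivity.
Qed.

Lemma inv_right n A B x i : is_inverse n A B -> (i < n)%nat ->
  mv n A (mv n B x) i = x i.
Proof.
  intros H Hi. rewrite <- mv_mmul. unfold mv.
  transitivity (mv n mid x i); [|apply mv_mid; auto].
  unfold mv; apply rsum_ext; intros j Hj. destruct (H i j Hi Hj) as [-> _]. reflexivity.
Qed.

Lemma mv_madd n A B x i : mv n (madd A B) x i = mv n A x i + mv n B x i.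
Proof. unfold mv, madd. rewrite <- rsum_plus. apply rsum_ext; intros; ring. Qed.

Lemma mv_mscale n c A x i : mv n (mscale c A) x i = c * mv n A x i.
Proof. unfold mv, mscale. rewrite <- rsum_scal. apply rsum_ext; intros; ring. Qed.

Lemma mv_minus n A x y i : mv n A (vsub x y) i = mv n A x i - mv n A y i.
Proof. unfold mv, vsub. rewrite <- rsum_minus. apply rsum_ext; intros; ring. Qed.

Lemma dot_sq_nonneg n x : 0 <= dot n x x.
Proof. unfold dot; apply rsum_nonneg; intros; nra. Qed.

Lemma dot_sq_eq0 n x : dot n x x = 0 -> forall i, (i < n)%nat -> x i = 0.
Proof.
  intros H i Hi. assert (x i * x i = 0).
  { apply (rsum_nonneg_eq0 n (fun i => x i * x i)); auto; intros; nra. }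
  nra.
Qed.

Lemma mv_lin p A x y c i : mv p A (fun j => x j + c * y j) i = mv p A x i + c * mv p A y i.
Proof. unfold mv. rewrite <- rsum_scal, <- rsum_plus. apply rsum_ext; intros; ring. Qed.

Lemma dot_lin_l n x y c z : dot n (fun i => x i + c * y i) z = dot n x z + c * dot n y z.
Proof. unfold dot. rewrite <- rsum_scal, <- rsum_plus. apply rsum_ext; intros; ring. Qed.

Lemma dot_lin_r n x z c w : dot n x (fun i => z i + c * w i) = dot n x z + c * dot n x w.
Proof. unfold dot. rewrite <- rsum_scal, <- rsum_plus. apply rsum_ext; intros; ring. Qed.

Lemma dot_ext_r n x z z' : (forall i, (i < n)%nat -> z i = z' i) -> dot n x z = dot n x z'.
Proof. intros H; unfold dot; apply rsum_ext; intros; rewrite H; auto. Qed.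

Lemma dot_ext_l n x x' z : (forall i, (i < n)%nat -> x i = x' i) -> dot n x z = dot n x' z.
Proof. intros H; unfold dot; apply rsum_ext; intros; rewrite H; auto. Qed.

Lemma QtAQ_dot n Q A k l : QtAQ n Q A k l = dot n (fun i => Q i k) (mv n A (fun j => Q j l)).
Proof.
  unfold QtAQ, mmul, mtr, dot, mv.
  transitivity (rsum n (fun i => rsum n (fun j => Q j k * A j i * Q i l))).
  - apply rsum_ext; intros. rewrite Rmult_comm, <- rsum_scal. apply rsum_ext; intros; ring.
  - rewrite rsum_swap. apply rsum_ext; intros. rewrite <- rsum_scal. apply rsum_ext; intros; ring.
Qed.

Definition is_int (a b : R) (f : R -> R) (v : R) : Prop :=
  exists pr : Riemann_integrable f a b, RiemannInt pr = v.

Lemma is_int_lin a b f g v w c : is_int a b f v -> is_int a b g w ->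
  is_int a b (fun s => f s + c * g s) (v + c * w).
Proof.
  intros [p1 e1] [p2 e2].
  exists (RiemannInt_P10 c p1 p2). rewrite RiemannInt_P13 with (pr1 := p1) (pr2 := p2).
  subst; reflexivity.
Qed.

Lemma is_int_zero a b : is_int a b (fun _ => 0) 0.
Proof.
  exists (RiemannInt_P14 a b 0).
  etransitivity; [apply (RiemannInt_P15 (RiemannInt_P14 a b 0)) | ring].
Qed.

Lemma is_int_ext a b f g v : a <= b -> is_int a b f v -> (forall s, f s = g s) -> is_int a b g v.
Proof.
  intros hab [p e] H.
  assert (pg : Riemann_integrable g a b).
  { apply Riemann_integrable_ext with f; auto. }
  exists pg. rewrite <- e. symmetry; apply RiemannInt_P18; auto.
Qed.

Lemma is_int_unique a b f v w : is_int a b f v -> is_int a b f w -> v = w.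
Proof. intros [p1 e1] [p2 e2]. subst. apply RiemannInt_P5. Qed.

Lemma is_int_nonneg a b f v : a <= b -> is_int a b f v ->
  (forall s, a < s < b -> 0 <= f s) -> 0 <= v.
Proof.
  intros hab [p e] H. subst.
  replace 0 with (RiemannInt (RiemannInt_P14 a b 0)).
  - apply RiemannInt_P19; auto.
  - etransitivity; [apply (RiemannInt_P15 (RiemannInt_P14 a b 0)) | ring].
Qed.

Lemma is_int_rsum a b p (F : nat -> R -> R) (V c : nat -> R) :
  (forall j, (j < p)%nat -> is_int a b (F j) (V j)) ->
  is_int a b (fun s => rsum p (fun j => c j * F j s)) (rsum p (fun j => c j * V j)).
Proof.
  induction p; intros H; simpl.
  - apply is_int_zero.
  - apply (is_int_lin a b (fun s => rsum p (fun j => c j * F j s)) (F p)).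
    + apply IHp; intros; apply H; lia.
    + apply H; lia.
Qed.

Section Kernel.
Variables (a b : R) (m : nat) (u : nat -> nat -> R -> R) (ustar : nat -> R -> R)
  (n : nat) (t : nat -> R) (K : mat).
Hypothesis hab : a <= b.
Hypothesis HK : forall i j, (i < n)%nat -> (j < n)%nat ->
     exists pr : Riemann_integrable
       (fun s => green m u ustar (t i) s * green m u ustar (t j) s) a b,
     K i j = RiemannInt pr.

Let G i s := green m u ustar (t i) s.

Lemma K_int i j : (i < n)%nat -> (j < n)%nat -> is_int a b (fun s => G i s * G j s) (K i j).
Proof. intros Hi Hj. destruct (HK i j Hi Hj) as [pr e]. exists pr. auto. Qed.

Lemma K_core x y : is_int a b
  (fun s => rsum n (fun i => x i * G i s) * rsum n (fun j => y j * G j s))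
  (dot n x (mv n K y)).
Proof.
  assert (H1 : forall i, (i < n)%nat -> is_int a b
     (fun s => G i s * rsum n (fun j => y j * G j s)) (mv n K y i)).
  { intros i Hi.
    assert (E : mv n K y i = rsum n (fun j => y j * K i j)).
    { unfold mv; apply rsum_ext; intros; ring. }
    rewrite E. apply is_int_ext with (fun s => rsum n (fun j => y j * (G i s * G j s))); auto.
    - apply is_int_rsum. intros; apply K_int; auto.
    - intros s. rewrite <- rsum_scal. apply rsum_ext; intros; ring. }
  unfold dot.
  apply is_int_ext with (fun s => rsum n (fun i => x i * (G i s * rsum n (fun j => y j * G j s)))); auto.
  - apply is_int_rsum; auto.
  - intros s. rewrite Rmult_comm, <- rsum_scal. apply rsum_ext; intros; ring.
Qed.

Lemma K_sym i j : (i < n)%nat -> (j < n)%nat -> K i j = K j i.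
Proof.
  intros Hi Hj. apply (is_int_unique a b (fun s => G i s * G j s)).
  - apply K_int; auto.
  - apply is_int_ext with (fun s => G j s * G i s); auto.
    + apply K_int; auto.
    + intros; ring.
Qed.

Lemma K_psd x : 0 <= dot n x (mv n K x).
Proof.
  apply (is_int_nonneg a b _ _ hab (K_core x x)). intros; nra.
Qed.

Lemma K_dot_sym x y : dot n x (mv n K y) = dot n y (mv n K x).
Proof.
  unfold dot, mv.
  transitivity (rsum n (fun i => rsum n (fun j => x i * K i j * y j))).
  - apply rsum_ext; intros. rewrite <- rsum_scal; apply rsum_ext; intros; ring.
  - rewrite rsum_swap. apply rsum_ext; intros j Hj.
    rewrite <- rsum_scal; apply rsum_ext; intros i Hi. rewrite (K_sym i j); auto; ring.
Qed.

Lemma K_psd_ker x : dot n x (mv n K x) = 0 -> forall i, (i < n)%nat -> mv n K x i = 0.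
Proof.
  intros H0.
  set (y := mv n K x).
  set (c := dot n y (mv n K x)).
  set (q := dot n y (mv n K y)).
  assert (Hq : 0 <= q) by apply K_psd.
  set (tt := - c / (q + 1)).
  assert (Hz : 0 <= dot n (fun i => x i + tt * y i) (mv n K (fun i => x i + tt * y i))) by apply K_psd.
  assert (E : dot n (fun i => x i + tt * y i) (mv n K (fun i => x i + tt * y i))
              = dot n x (mv n K x) + 2 * tt * c + tt * tt * q).
  { assert (Hs : dot n x (mv n K y) = c) by (unfold c; apply K_dot_sym).
    rewrite (dot_ext_r n _ _ (fun i => mv n K x i + tt * mv n K y i)) by (intros; apply mv_lin).
    rewrite dot_lin_l, !dot_lin_r. fold y. rewrite Hs. unfold c, q. fold y. try ring. }
  assert (Hc : c = - tt * (q + 1)).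
  { unfold tt. field. lra. }
  assert (c = 0) by nra.
  assert (Hyy : c = dot n y y) by (unfold c; apply dot_ext_r; intros; reflexivity).
  intros i Hi. apply (dot_sq_eq0 n y); [lra | exact Hi].
Qed.
End Kernel.

Lemma K_pd n K x : (forall y, 0 <= dot n y (mv n K y)) ->
  (forall y, dot n y (mv n K y) = 0 -> forall i, (i < n)%nat -> mv n K y i = 0) ->
  invertible n K -> dot n x (mv n K x) = 0 -> forall i, (i < n)%nat -> x i = 0.
Proof.
  intros _ Hker [B HB] H0 i Hi.
  rewrite <- (inv_left n K B x i HB Hi). unfold mv at 1. apply rsum_zero; intros j Hj.
  rewrite (Hker x H0 j Hj). ring.
Qed.

Section Band.
Variables (a b : R) (m : nat) (u : nat -> nat -> R -> R) (ustar : nat -> R -> R)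
  (n : nat) (t : nat -> R) (K : mat) (Q : mat).
Hypothesis hab : a <= b.
Hypothesis HK : forall i j, (i < n)%nat -> (j < n)%nat ->
     exists pr : Riemann_integrable
       (fun s => green m u ustar (t i) s * green m u ustar (t j) s) a b,
     K i j = RiemannInt pr.
Hypothesis Htinc : forall i, (S i < n)%nat -> t i < t (S i).
Hypothesis HQT : forall k j, (k < n - m)%nat -> (j < m)%nat -> mmul n (mtr Q) (Tmat u t) k j = 0.
Hypothesis HQband : forall i j, (i < n)%nat -> (j < n - m)%nat -> ~ (j <= i <= j + m)%nat -> Q i j = 0.

Lemma t_lt i j : (i < j)%nat -> (j < n)%nat -> t i < t j.
Proof.
  induction j; intros H1 H2; [lia|].
  destruct (Nat.eq_dec i j) as [->|ne].
  - apply Htinc; auto.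
  - apply Rlt_trans with (t j); [apply IHj; lia | apply Htinc; auto].
Qed.

Lemma t_le i j : (i <= j)%nat -> (j < n)%nat -> t i <= t j.
Proof.
  intros H1 H2. destruct (Nat.eq_dec i j) as [->|ne]; [lra|]. left; apply t_lt; lia.
Qed.

Let F k s := rsum n (fun i => Q i k * green m u ustar (t i) s).

Lemma F_left l s : (l < n - m)%nat -> s < t l -> F l s = 0.
Proof.
  intros Hl Hs. unfold F.
  transitivity (rsum n (fun i => rsum m (fun j => ustar j s * (Q i l * u j O (t i))))).
  - apply rsum_ext; intros i Hi.
    destruct (Compare_dec.le_dec l i) as [Hli|Hli].
    + unfold green. destruct (Rle_dec s (t i)) as [_|Hn].
      * rewrite <- rsum_scal. apply rsum_ext; intros; ring.
      * exfalso; apply Hn. assert (t l <= t i) by (apply t_le; lia). lra.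
    + rewrite HQband by lia. rewrite rsum_zero; [ring|]. intros; ring.
  - rewrite rsum_swap. apply rsum_zero; intros j Hj.
    rewrite rsum_scal. transitivity (ustar j s * mmul n (mtr Q) (Tmat u t) l j); [reflexivity|].
    rewrite HQT; auto; ring.
Qed.

Lemma F_right k s : (k < n - m)%nat -> t (k + m) < s -> F k s = 0.
Proof.
  intros Hk Hs. unfold F. apply rsum_zero; intros i Hi.
  destruct (Compare_dec.le_dec i (k + m)) as [H1|H1]; destruct (Compare_dec.le_dec k i) as [H2|H2].
  - unfold green. destruct (Rle_dec s (t i)) as [Hr|_]; [|ring].
    assert (t i <= t (k + m)) by (apply t_le; lia). lra.
  - rewrite HQband by lia; ring.
  - rewrite HQband by lia; ring.
  - rewrite HQband by lia; ring.
Qed.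

Lemma F_band k l s : (k < n - m)%nat -> (l < n - m)%nat -> (k + m < l)%nat -> F k s * F l s = 0.
Proof.
  intros Hk Hl Hkl. destruct (Rlt_dec s (t l)) as [H|H].
  - rewrite (F_left l s); auto; ring.
  - rewrite (F_right k s); auto; [ring|]. assert (t (k + m) < t l) by (apply t_lt; lia). lra.
Qed.

Lemma QKQ_band k l : (k < n - m)%nat -> (l < n - m)%nat -> (k + m < l \/ l + m < k)%nat ->
  QtAQ n Q K k l = 0.
Proof.
  intros Hk Hl Hkl. rewrite QtAQ_dot.
  apply (is_int_unique a b (fun s => F k s * F l s)).
  - apply (K_core a b m u ustar n t K hab HK).
  - apply is_int_ext with (fun _ => 0); auto; [apply is_int_zero|].
    intros s. destruct Hkl.
    + symmetry; apply F_band; auto.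
    + rewrite Rmult_comm; symmetry; apply F_band; auto.
Qed.
End Band.

Lemma pt_id (Yi Ta0 Tda Kb0 Kdb b0 db di lam : R) :
  di * (Yi - Ta0 - Kb0) = lam * b0 ->
  (Yi - (Ta0 + Tda) - (Kb0 + Kdb)) * (di * (Yi - (Ta0 + Tda) - (Kb0 + Kdb)))
    + lam * ((b0 + db) * (Kb0 + Kdb))
  - ((Yi - Ta0 - Kb0) * (di * (Yi - Ta0 - Kb0)) + lam * (b0 * Kb0)
     + di * (Tda + Kdb) * (Tda + Kdb) + lam * (db * Kdb))
  = -2 * lam * (b0 * Tda) - lam * (b0 * Kdb) + lam * (db * Kb0).
Proof.
  intros H.
  replace (-2 * lam * (b0 * Tda) - lam * (b0 * Kdb) + lam * (db * Kb0))
    with (-2 * lam * (b0 * Tda) - lam * (b0 * Kdb) + lam * (db * Kb0)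
          + (-2) * (Tda + Kdb) * (di * (Yi - Ta0 - Kb0) - lam * b0)) by (rewrite H; ring).
  ring.
Qed.

Lemma Dinv_dot n d x : (forall i, (i < n)%nat -> 0 < d i) ->
  dot n x (mv n (Dinv d) x) = rsum n (fun i => x i * (/ d i * x i)).
Proof.
  intros Hd. unfold Dinv. apply rsum_ext; intros i Hi. rewrite mv_diag; auto.
Qed.

Lemma Dinv_nonneg n d x : (forall i, (i < n)%nat -> 0 < d i) -> 0 <= dot n x (mv n (Dinv d) x).
Proof.
  intros Hd. rewrite Dinv_dot; auto. apply rsum_nonneg; intros i Hi.
  assert (0 < / d i) by (apply Rinv_0_lt_compat; auto). nra.
Qed.

Lemma Dinv_pd n d x : (forall i, (i < n)%nat -> 0 < d i) -> dot n x (mv n (Dinv d) x) = 0 ->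
  forall i, (i < n)%nat -> x i = 0.
Proof.
  intros Hd H0 i Hi. rewrite Dinv_dot in H0; auto.
  assert (E : x i * (/ d i * x i) = 0).
  { apply (rsum_nonneg_eq0 n (fun i => x i * (/ d i * x i))); auto.
    intros j Hj. assert (0 < / d j) by (apply Rinv_0_lt_compat; auto). nra. }
  assert (0 < / d i) by (apply Rinv_0_lt_compat; auto).
  destruct (Rmult_integral _ _ E) as [E1|E2]; auto.
  destruct (Rmult_integral _ _ E2); auto; lra.
Qed.

Lemma mv_M n K lam d x i : mv n (Mmat K lam d) x i = mv n K x i + lam * mv n (Dinv d) x i.
Proof. unfold Mmat. rewrite mv_madd, mv_mscale. reflexivity. Qed.

Lemma QtAQ_mv n p Q A y k : mv p (QtAQ n Q A) y k = mv n (mtr Q) (mv n A (mv p Q y)) k.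
Proof. unfold QtAQ. rewrite mv_mmul. apply mv_mmul. Qed.

Theorem mainTheorem11
  (a b : R) (m : nat) (w : nat -> R -> R) (u : nat -> nat -> R -> R)
  (ustar : nat -> R -> R) (n : nat) (t : nat -> R) (K : mat) (d : vec)
  (lam : R) (Q : mat) (Y : vec) :
  (* setting *)
  a < b -> (1 <= m)%nat ->
  (forall j, (j < m)%nat -> cont_on a b (w j)) ->
  (forall i, (i < m)%nat -> has_derivs a b m (u i)) ->
  (forall i, (i < m)%nat -> forall s, a <= s <= b -> Lop m w (u i) s = 0) ->
  (forall c : vec, (forall s, a <= s <= b -> rsum m (fun i => c i * u i O s) = 0) ->
     forall i, (i < m)%nat -> c i = 0) ->
  (forall dmu : nat -> R -> R, has_derivs a b m dmu ->
     (forall s, a <= s <= b -> Lop m w dmu s = 0) ->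
     exists c : vec, forall s, a <= s <= b -> dmu O s = rsum m (fun i => c i * u i O s)) ->
  (forall s, a <= s <= b -> exists Wi, is_inverse m (wronskian u s) Wi /\
     forall i, (i < m)%nat -> ustar i s = Wi (m - 1)%nat i) ->
  (* data *)
  a < t O -> (forall i, (S i < n)%nat -> t i < t (S i)) -> t (n - 1)%nat < b ->
  (m < n)%nat ->
  full_column_rank n m (Tmat u t) ->
  (forall i j, (i < n)%nat -> (j < n)%nat ->
     exists pr : Riemann_integrable
       (fun s => green m u ustar (t i) s * green m u ustar (t j) s) a b,
     K i j = RiemannInt pr) ->
  invertible n K ->
  (forall i, (i < n)%nat -> 0 < d i) ->
  0 < lam ->
  full_column_rank n (n - m) Q ->
  (forall k j, (k < n - m)%nat -> (j < m)%nat -> mmul n (mtr Q) (Tmat u t) k j = 0) ->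
  (forall i j, (i < n)%nat -> (j < n - m)%nat -> ~ (j <= i <= j + m)%nat -> Q i j = 0) ->
  (* (i) *)
  (forall k l, (k < n - m)%nat -> (l < n - m)%nat -> (k + m < l \/ l + m < k)%nat ->
     QtAQ n Q (Mmat K lam d) k l = 0 /\ QtAQ n Q K k l = 0 /\ QtAQ n Q (Dinv d) k l = 0)
  /\
  (* (ii) *)
  (exists al be, is_minimizer n m Y (Tmat u t) K (diag d) lam al be) /\
  (forall al be al' be',
     is_minimizer n m Y (Tmat u t) K (diag d) lam al be ->
     is_minimizer n m Y (Tmat u t) K (diag d) lam al' be' ->
     veq m al al' /\ veq n be be') /\
  (forall al be, is_minimizer n m Y (Tmat u t) K (diag d) lam al be ->
     (forall j, (j < m)%nat -> mv n (mtr (Tmat u t)) be j = 0) /\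
     (exists B, is_inverse (n - m) (QtAQ n Q (Mmat K lam d)) B /\
        veq n be (mv n Q (mv (n - m) B (mv n (mtr Q) Y)))) /\
     (exists C, is_inverse m (mmul n (mtr (Tmat u t)) (Tmat u t)) C /\
        veq m al (mv m C (mv n (mtr (Tmat u t)) (vsub Y (mv n (Mmat K lam d) be))))) /\
     (forall i, (i < n)%nat ->
        mv m (Tmat u t) al i + mv n K be i = Y i - lam * mv n (Dinv d) be i)).
Proof.
  intros hab hm Hw Hu HL Hind Hsol Hwr Hat Htinc Htb Hmn HTfcr HK HKinv Hd Hlam HQfcr HQT HQband.
  assert (hab' : a <= b) by lra.
  set (T := Tmat u t) in *.
  set (nm := (n - m)%nat) in *.
  set (Mm := Mmat K lam d) in *.
  assert (Kpsd : forall x, 0 <= dot n x (mv n K x)) by (intros; apply (K_psd a b m u ustar n t K hab' HK)).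
  assert (Kpd : forall x, dot n x (mv n K x) = 0 -> forall i, (i < n)%nat -> x i = 0).
  { intros x; apply K_pd; auto. apply (K_psd_ker a b m u ustar n t K hab' HK). }
  assert (Mdot : forall x, dot n x (mv n Mm x) = dot n x (mv n K x) + lam * dot n x (mv n (Dinv d) x)).
  { intros x. rewrite (dot_ext_r n x _ (fun i => mv n K x i + lam * mv n (Dinv d) x i))
      by (intros; apply mv_M). apply dot_lin_r. }
  assert (F4 : forall y j, (j < m)%nat -> mv n (mtr T) (mv nm Q y) j = 0).
  { intros y j Hj. rewrite <- mv_mmul. unfold mv at 1. apply rsum_zero; intros k Hk.
    replace (mmul n (mtr T) Q j k) with (mmul n (mtr Q) T k j).
    - rewrite HQT; auto; ring.
    - unfold mmul, mtr; apply rsum_ext; intros; ring. }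
  assert (QT0 : forall x k, (k < nm)%nat -> mv n (mtr Q) (mv m T x) k = 0).
  { intros x k Hk. rewrite <- mv_mmul. unfold mv at 1. apply rsum_zero; intros j Hj.
    rewrite HQT; auto; ring. }
  assert (TtT_ker : forall x, (forall j, (j < m)%nat -> mv n (mtr T) (mv m T x) j = 0) ->
            forall j, (j < m)%nat -> x j = 0).
  { intros x H. apply HTfcr. apply dot_sq_eq0.
    rewrite <- (dot_mv_tr m n x (mtr T)). unfold dot; apply rsum_zero; intros j Hj.
    rewrite H; auto; ring. }
  assert (QtQ_ker : forall y, (forall k, (k < nm)%nat -> mv n (mtr Q) (mv nm Q y) k = 0) ->
            forall i, (i < n)%nat -> mv nm Q y i = 0).
  { intros y H. apply dot_sq_eq0.
    rewrite <- (dot_mv_tr nm n y (mtr Q)). unfold dot; apply rsum_zero; intros j Hj.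
    rewrite H; auto; ring. }
  assert (PartI : forall k l, (k < nm)%nat -> (l < nm)%nat -> (k + m < l \/ l + m < k)%nat ->
     QtAQ n Q Mm k l = 0 /\ QtAQ n Q K k l = 0 /\ QtAQ n Q (Dinv d) k l = 0).
  { intros k l Hk Hl Hkl.
    assert (E1 : QtAQ n Q K k l = 0) by (apply (QKQ_band a b m u ustar n t K Q hab' HK Htinc HQT HQband); auto).
    assert (E2 : QtAQ n Q (Dinv d) k l = 0).
    { rewrite QtAQ_dot. unfold dot; apply rsum_zero; intros i Hi. unfold Dinv; rewrite mv_diag; auto.
      destruct (Compare_dec.le_dec k i); destruct (Compare_dec.le_dec i (k + m));
      destruct (Compare_dec.le_dec l i); destruct (Compare_dec.le_dec i (l + m));
      first [ rewrite (HQband i k) by lia; ring | rewrite (HQband i l) by lia; ring | lia ]. }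
    split; [|split]; auto.
    rewrite QtAQ_dot.
    rewrite (dot_ext_r n _ _ (fun i => mv n K (fun j => Q j l) i + lam * mv n (Dinv d) (fun j => Q j l) i))
      by (intros; apply mv_M).
    rewrite dot_lin_r, <- !QtAQ_dot, E1, E2. ring. }
  set (P := fun i j => if Nat.ltb j m then T i j else Q i (j - m)%nat).
  assert (Psplit : forall z i, mv n P z i = mv m T z i + mv nm Q (fun k => z (m + k)%nat) i).
  { intros z i. unfold mv at 1. replace n with (m + nm)%nat at 1 by (unfold nm; lia).
    rewrite rsum_split. f_equal.
    - apply rsum_ext; intros j Hj. unfold P. destruct (Nat.ltb_spec j m); [reflexivity|lia].
    - apply rsum_ext; intros k Hk. unfold P. destruct (Nat.ltb_spec (m + k) m); [lia|].
      replace (m + k - m)%nat with k by lia. reflexivity. }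
  assert (Pinv : invertible n P).
  { apply MC.fcr_invertible. intros z Hz.
    assert (Hx : forall j, (j < m)%nat -> z j = 0).
    { apply TtT_ker. intros j Hj.
      assert (E : mv n (mtr T) (mv n P z) j = 0).
      { unfold mv at 1. apply rsum_zero; intros i Hi. rewrite Hz; auto; ring. }
      rewrite (mv_ext n (mtr T) _ (vsub (mv n P z) (mv nm Q (fun k => z (m + k)%nat)))).
      - rewrite mv_minus, E, F4; auto; ring.
      - intros i Hi. unfold vsub. rewrite Psplit. ring. }
    assert (Hy : forall k, (k < nm)%nat -> z (m + k)%nat = 0).
    { apply HQfcr. intros i Hi. rewrite <- (Hz i Hi), Psplit.
      replace (mv m T z i) with 0; [ring|].
      symmetry; unfold mv; apply rsum_zero; intros j Hj; rewrite Hx; auto; ring. }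
    intros j Hj. destruct (Nat.ltb_spec j m).
    - apply Hx; auto.
    - replace j with (m + (j - m))%nat by lia. apply Hy. unfold nm; lia. }
  assert (Dec : forall e, exists x y, forall i, (i < n)%nat -> e i = mv m T x i + mv nm Q y i).
  { intros e. destruct Pinv as [Pi HPi].
    exists (mv n Pi e), (fun k => mv n Pi e (m + k)%nat). intros i Hi.
    rewrite <- Psplit. symmetry; apply inv_right; auto. }
  assert (Binv : invertible nm (QtAQ n Q Mm)).
  { apply MC.fcr_invertible. intros y Hy.
    assert (Hz : dot n (mv nm Q y) (mv n Mm (mv nm Q y)) = 0).
    { rewrite <- (dot_mv_tr nm n y (mtr Q)). unfold dot; apply rsum_zero; intros k Hk.
      rewrite <- QtAQ_mv, Hy; auto; ring. }
    rewrite Mdot in Hz.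
    assert (H1 := Kpsd (mv nm Q y)).
    assert (H2 := Dinv_nonneg n d (mv nm Q y) Hd).
    assert (H3 : dot n (mv nm Q y) (mv n (Dinv d) (mv nm Q y)) = 0) by nra.
    apply HQfcr. apply (Dinv_pd n d); auto. }
  assert (Cinv : invertible m (mmul n (mtr T) T)).
  { apply MC.fcr_invertible. intros x Hx. apply TtT_ker. intros j Hj.
    rewrite <- mv_mmul. apply Hx; auto. }
  destruct Binv as [B0 HB0]. destruct Cinv as [C HC].
  set (B := fun i j => if Nat.ltb i nm then B0 i j else 0).
  assert (HB : is_inverse nm (QtAQ n Q Mm) B).
  { intros i j Hi Hj. destruct (HB0 i j Hi Hj) as [E1 E2]. split.
    - rewrite <- E1. unfold mmul; apply rsum_ext; intros k Hk. unfold B.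
      destruct (Nat.ltb_spec k nm); [reflexivity|lia].
    - rewrite <- E2. unfold mmul; apply rsum_ext; intros k Hk. unfold B.
      destruct (Nat.ltb_spec i nm); [reflexivity|lia]. }
  assert (QBn : forall v i, mv n Q (mv nm B v) i = mv nm Q (mv nm B v) i).
  { intros v i. unfold mv at 1. replace n with (nm + m)%nat at 1 by (unfold nm; lia).
    rewrite rsum_split. rewrite (rsum_zero m); [rewrite Rplus_0_r; reflexivity|].
    intros k Hk. unfold mv, B. rewrite rsum_zero; [ring|].
    intros j Hj. destruct (Nat.ltb_spec (nm + k) nm); [lia|ring]. }
  set (be0 := mv nm Q (mv nm B (mv n (mtr Q) Y))).
  set (e := vsub Y (mv n Mm be0)).
  set (al0 := mv m C (mv n (mtr T) e)).
  assert (Qe : forall k, (k < nm)%nat -> mv n (mtr Q) e k = 0).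
  { intros k Hk. unfold e. rewrite mv_minus. unfold be0. rewrite <- QtAQ_mv, inv_right; auto. ring. }
  assert (Te : forall i, (i < n)%nat -> e i = mv m T al0 i).
  { destruct (Dec e) as [x [y Hxy]].
    assert (Hqy : forall i, (i < n)%nat -> mv nm Q y i = 0).
    { apply QtQ_ker. intros k Hk. rewrite <- (Qe k Hk).
      rewrite (mv_ext n (mtr Q) e (fun i => mv m T x i + 1 * mv nm Q y i)).
      - rewrite mv_lin, QT0; auto; ring.
      - intros; rewrite Hxy; auto; ring. }
    assert (Hex : forall i, (i < n)%nat -> e i = mv m T x i).
    { intros i Hi; rewrite Hxy, Hqy; auto; ring. }
    assert (Hal : forall j, (j < m)%nat -> al0 j = x j).
    { intros j Hj. unfold al0. rewrite (mv_ext m C _ (mv m (mmul n (mtr T) T) x)).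
      - apply inv_left; auto.
      - intros j' Hj'. rewrite mv_mmul. apply mv_ext. auto. }
    intros i Hi. rewrite Hex; auto. apply mv_ext. intros; rewrite Hal; auto. }
  assert (HY : forall i, (i < n)%nat -> Y i = mv m T al0 i + mv n Mm be0 i).
  { intros i Hi. rewrite <- Te; auto. unfold e, vsub. ring. }
  assert (Tbe0 : forall j, (j < m)%nat -> mv n (mtr T) be0 j = 0).
  { intros j Hj. unfold be0. apply F4; auto. }
  assert (Hr0 : forall i, (i < n)%nat ->
            d i * (Y i - mv m T al0 i - mv n K be0 i) = lam * be0 i).
  { intros i Hi. rewrite HY; auto. unfold Mm; rewrite mv_M. unfold Dinv; rewrite mv_diag; auto.
    field. apply Rgt_not_eq, Hd; auto. }
  assert (objR : forall al be, pls_obj n m Y T K (diag d) lam al be =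
     rsum n (fun i => (Y i - mv m T al i - mv n K be i) * (d i * (Y i - mv m T al i - mv n K be i))
                      + lam * (be i * mv n K be i))).
  { intros al be. unfold pls_obj, dot. rewrite rsum_plus, rsum_scal. f_equal.
    apply rsum_ext; intros i Hi. rewrite mv_diag; auto. }
  assert (Obj : forall al be,
    pls_obj n m Y T K (diag d) lam al be =
    pls_obj n m Y T K (diag d) lam al0 be0
    + rsum n (fun i => d i * (mv m T (fun j => al j - al0 j) i + mv n K (fun j => be j - be0 j) i)
                           * (mv m T (fun j => al j - al0 j) i + mv n K (fun j => be j - be0 j) i))
    + lam * dot n (fun j => be j - be0 j) (mv n K (fun j => be j - be0 j))).
  { intros al be.
    set (da := fun j => al j - al0 j). set (db := fun j => be j - be0 j).
    assert (Tal : forall i, mv m T al i = mv m T al0 i + mv m T da i).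
    { intros i. rewrite <- (Rmult_1_l (mv m T da i)), <- mv_lin. apply mv_ext; intros; unfold da; ring. }
    assert (Kbe : forall i, mv n K be i = mv n K be0 i + mv n K db i).
    { intros i. rewrite <- (Rmult_1_l (mv n K db i)), <- mv_lin. apply mv_ext; intros; unfold db; ring. }
    assert (Z1 : rsum n (fun i => be0 i * mv m T da i) = 0).
    { change (dot n be0 (mv m T da) = 0). rewrite dot_mv_tr. unfold dot; apply rsum_zero; intros j Hj.
      rewrite Tbe0; auto; ring. }
    assert (Z2 : rsum n (fun i => db i * mv n K be0 i) = rsum n (fun i => be0 i * mv n K db i)).
    { apply (K_dot_sym a b m u ustar n t K hab' HK). }
    rewrite !objR. unfold dot.
    rewrite <- rsum_scal, <- !rsum_plus.
    apply Rminus_diag_uniq. rewrite <- rsum_minus.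
    transitivity (rsum n (fun i => -2 * lam * (be0 i * mv m T da i) - lam * (be0 i * mv n K db i)
                                    + lam * (db i * mv n K be0 i))).
    - apply rsum_ext; intros i Hi. rewrite Tal, Kbe.
      replace (be i) with (be0 i + db i) by (unfold db; ring).
      apply pt_id. apply Hr0; auto.
    - replace (rsum n (fun i => -2 * lam * (be0 i * mv m T da i) - lam * (be0 i * mv n K db i)
                                    + lam * (db i * mv n K be0 i)))
        with (-2 * lam * rsum n (fun i => be0 i * mv m T da i) - lam * rsum n (fun i => be0 i * mv n K db i)
              + lam * rsum n (fun i => db i * mv n K be0 i)).
      + rewrite Z1, Z2; ring.
      + rewrite <- !rsum_scal, <- rsum_minus, <- rsum_plus. apply rsum_ext; intros; ring. }
  assert (Sd_nonneg : forall (s : vec), 0 <= rsum n (fun i => d i * s i * s i)).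
  { intros s. apply rsum_nonneg; intros i Hi. assert (0 < d i) by auto. nra. }
  assert (Min0 : is_minimizer n m Y T K (diag d) lam al0 be0).
  { intros al' be'. rewrite (Obj al' be').
    assert (H1 := Sd_nonneg (fun i => mv m T (fun j => al' j - al0 j) i + mv n K (fun j => be' j - be0 j) i)).
    assert (H2 := Kpsd (fun j => be' j - be0 j)). simpl in H1. nra. }
  assert (Uniq : forall al be, is_minimizer n m Y T K (diag d) lam al be ->
     (forall j, (j < m)%nat -> al j = al0 j) /\ (forall i, (i < n)%nat -> be i = be0 i)).
  { intros al be Hmin. assert (H := Hmin al0 be0). rewrite (Obj al be) in H.
    set (s := fun i => mv m T (fun j => al j - al0 j) i + mv n K (fun j => be j - be0 j) i).
    assert (H1 := Sd_nonneg s).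
    assert (H2 := Kpsd (fun j => be j - be0 j)).
    set (X1 := rsum n (fun i => d i * s i * s i)) in *.
    set (X2 := dot n (fun j => be j - be0 j) (mv n K (fun j => be j - be0 j))) in *.
    assert (HX : X1 = rsum n (fun i => d i * (mv m T (fun j => al j - al0 j) i + mv n K (fun j => be j - be0 j) i)
                           * (mv m T (fun j => al j - al0 j) i + mv n K (fun j => be j - be0 j) i))) by reflexivity.
    rewrite <- HX in H.
    assert (E2 : X2 = 0) by nra.
    assert (E1 : X1 = 0) by nra.
    assert (Hb : forall i, (i < n)%nat -> be i = be0 i).
    { intros i Hi. assert (Z := Kpd _ E2 i Hi). simpl in Z. lra. }
    split; auto.
    assert (Hs : forall i, (i < n)%nat -> s i = 0).
    { intros i Hi. assert (Z : d i * s i * s i = 0).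
      { apply (rsum_nonneg_eq0 n (fun i => d i * s i * s i)); auto.
        intros j Hj. assert (0 < d j) by auto. nra. }
      assert (0 < d i) by auto.
      destruct (Rmult_integral _ _ Z) as [Z1|Z1]; [destruct (Rmult_integral _ _ Z1); [lra|auto] | auto]. }
    assert (Hda : forall j, (j < m)%nat -> al j - al0 j = 0).
    { apply (HTfcr (fun j => al j - al0 j)). intros i Hi.
      rewrite <- (Hs i Hi). unfold s.
      replace (mv n K (fun j => be j - be0 j) i) with 0; [ring|].
      symmetry; unfold mv; apply rsum_zero; intros j Hj. rewrite Hb; auto; ring. }
    intros j Hj. assert (Z := Hda j Hj). lra. }
  split; [exact PartI|].
  split; [exists al0, be0; exact Min0|].
  split.
  { intros al be al' be' H1 H2. destruct (Uniq _ _ H1) as [A1 B1]. destruct (Uniq _ _ H2) as [A2 B2].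
    split; intros i Hi; [rewrite A1, A2 | rewrite B1, B2]; auto. }
  intros al be Hmin. destruct (Uniq al be Hmin) as [Ha Hb].
  split; [|split; [|split]].
  - intros j Hj. rewrite (mv_ext n (mtr T) be be0 Hb). apply Tbe0; auto.
  - exists B. split; [exact HB|]. intros i Hi. rewrite Hb by exact Hi. unfold be0. symmetry; apply QBn.
  - exists C. split; [exact HC|]. intros j Hj. rewrite Ha by exact Hj. unfold al0, e. apply mv_ext.
    intros j' Hj'. apply mv_ext. intros i Hi. unfold vsub. rewrite (mv_ext n Mm be be0 Hb). reflexivity.
  - intros i Hi. rewrite (mv_ext m T al al0 Ha), (mv_ext n K be be0 Hb), (mv_ext n (Dinv d) be be0 Hb).
    rewrite (HY i Hi). unfold Mm. rewrite mv_M. ring.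
Qed.
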